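(* Let $G$ be a finite abelian group and let $\rho\ge4$ be an integer. If $A$ is a generating set for $G$ such that $\operatorname{diam}^+_A(G)\ge\rho$ and $|A|>\frac{3}{2\rho}|G|$, then there exist a subgroup $H\le G$ and an element $g\in G$ such that: (i) $A\subseteq H\cup(g+H)$ and $|A|>\left(2-\frac{\rho-3}{2\rho}\right)|H|$; (ii) $G/H$ is cyclic, $\rho+1\le|G/H|<\frac43\rho$, and $g+H$ generates $G/H$.
   Context: Groups are written additively. For $A\subseteq G$ let $A_0:=A\cup\{0\}$ and $\langle A\rangle^+_\rho:=\rho A_0=\{a_1+\dots+a_\rho:a_i\in A_0\}$. $\operatorname{diam}^+_A(G):=\min\{\rho\in\mathbb{N}_0:\langle A\rangle^+_\rho=G\}$ ($\min\varnothing=\infty$). *)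

(* Defs.v *)
(* Finite abelian groups are modelled as an abelian
   G : {group gT} in a finGroupType; the paper's additive notation
   (0, +, g + H) becomes multiplicative (1, *, g *: H). *)
From mathcomp Require Import all_boot all_fingroup all_solvable.
Set Implicit Arguments. Unset Strict Implicit. Unset Printing Implicit Defensive.
Import GroupScope.
Local Open Scope group_scope.

Definition A0 (gT : finGroupType) (A : {set gT}) : {set gT} := 1 |: A.

Fixpoint sumsetA (gT : finGroupType) (A : {set gT}) (rho : nat) : {set gT} :=
  match rho with
  | 0 => 1
  | r.+1 => sumsetA A r * A0 A
  end.

(* diam^+_A(G) >= rho, where diam^+_A(G) = min {k : <A>^+_k = G}, min ∅ = ∞ *)
Definition diam_ge (gT : finGroupType) (A G : {set gT}) (rho : nat) : Prop :=
  forall k : nat, sumsetA A k = G -> rho <= k.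

(* Main.v *)
Require Import Defs.
From mathcomp Require Import all_boot all_fingroup all_solvable.
From Stdlib Require Import Lia Psatz ArithRing.
Set Implicit Arguments. Unset Strict Implicit. Unset Printing Implicit Defensive.

Section CoreArith.
Local Open Scope coq_nat_scope.
Lemma core u v r c : (1 <= r) -> (1 <= c) -> (0 < u) \/ (0 < v) ->
  (Nat.add v c <= Nat.add (Nat.mul c u) 1) \/ (Nat.add u r <= Nat.add (Nat.mul r v) 1).
Proof.
intros h1 h3 h5.
destruct (Compare_dec.le_gt_dec v u) as [Hl|Hl].
- left. destruct u as [|u]; [lia|]. destruct c as [|c]; [lia|]. nia.
- right. destruct v as [|v]; [lia|]. destruct r as [|r]; [lia|]. nia.
Qed.

Lemma arith_a3 m a q : 3 <= m -> 2 <= a -> Nat.add (Nat.mul m a) 2 <= q ->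
  Nat.mul 3 q < Nat.mul (Nat.mul 2 (S m)) (S a) -> False.
Proof. intros; nia. Qed.

End CoreArith.

Lemma core_ssr p q r c : 0 < r <= q -> 0 < c <= p -> (r < q) || (c < p) ->
  (p <= c*(q-r) + 1) || (q <= r*(p-c)+1).
Proof.
move=> /andP[h1 h2] /andP[h3 h4] h5.
have h5' : (0 < q - r \/ 0 < p - c)%coq_nat.
  by case/orP: h5; rewrite -subn_gt0 => /ltP; auto.
move: h1 h3 => /leP h1 /leP h3.
case: (core h1 h3 h5') => /leP H; apply/orP; [left|right];
  by move: H; rewrite ?plusE ?multE ?minusE subnK.
Qed.

Lemma grid_arith h1 h2 d i s t m : 0 < d -> d %| h1 -> d %| h2 -> h1 %| s -> h2 %| t ->
  (i*h1*h2 = s*t*d)%N -> (m*d = h1*h2)%N -> h1 <= s -> s <= m -> h2 <= t -> t <= m ->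
  (s < m) || (t < m) -> (h1 <= t - i + d) || (h2 <= s - i + d).
Proof.
move=> d0 /dvdnP[p ->] /dvdnP[q ->] /dvdnP[r ->] /dvdnP[c ->].
case: (posnP p) => [->|P0]; first by rewrite mul0n.
case: (posnP q) => [->|Q0]; first by rewrite mul0n orbT.

move=> Ei Em.
have Ei' : i = (r * c * d)%N.
  apply/eqP; rewrite -(eqn_pmul2r (_ : 0 < p * d * (q * d))) ?muln_gt0 ?P0 ?Q0 ?d0 //.
  apply/eqP; rewrite mulnA Ei -!multE. match goal with |- ?a = ?b => change (a = b :> nat) end; ring.
have Em' : m = (p * q * d)%N.
  apply/eqP; rewrite -(eqn_pmul2r d0) Em; apply/eqP.
  rewrite -!multE; match goal with |- ?a = ?b => change (a = b :> nat) end; ring.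
subst i m.
have pd0 : 0 < p * d by rewrite muln_gt0 P0 d0.
have qd0 : 0 < q * d by rewrite muln_gt0 Q0 d0.
have Epq : (p * q * d = q * (p * d))%N by rewrite mulnCA mulnA.
have Epq' : (p * q * d = p * (q * d))%N by rewrite mulnA.
move=> r1 rq c1 cp rcq.
move: r1; rewrite -{1}[(p * d)%N]mul1n leq_pmul2r // => r1.
move: rq; rewrite Epq leq_pmul2r // => rq.
move: c1; rewrite -{1}[(q * d)%N]mul1n leq_pmul2r // => c1.
move: cp; rewrite Epq' leq_pmul2r // => cp.
move: rcq; rewrite {1}Epq ltn_pmul2r // Epq' ltn_pmul2r // => rcq.
have E1 : (c * (q * d) - r * c * d + d = (c * (q - r) + 1) * d)%N.
  by rewrite mulnDl mul1n mulnBr mulnBl mulnA [(r * c)%N]mulnC.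
have E2 : (r * (p * d) - r * c * d + d = (r * (p - c) + 1) * d)%N.
  by rewrite mulnDl mul1n mulnBr mulnBl mulnA.
rewrite E1 E2 !leq_pmul2r //; apply: core_ssr => //; apply/andP; split => //.
Qed.


Lemma arith_a3_ssr m a q : 3 <= m -> 2 <= a -> m * a + 2 <= q ->
  3 * q < 2 * m.+1 * a.+1 -> False.
Proof.
move=> /leP h1 /leP h2 /leP h3 /ltP h4; move: h3 h4.
rewrite -?multE -?plusE => h3 h4; exact: (arith_a3 h1 h2 h3 h4).
Qed.

Section Generic.
Local Open Scope group_scope.
Variable gT : finGroupType.
Implicit Types X Y Z R S T : {set gT}.

Lemma cardsUD S T : #|S :|: T| = #|S| + #|T :\: S|.
Proof.
have h1 := cardsUI S T; have h2 := cardsID S T; rewrite setIC in h2.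
apply/eqP; rewrite -(eqn_add2r #|S :&: T|) h1 -h2.
by rewrite -addnA [(#|T :\: S| + _)%N]addnC.
Qed.

Lemma lcoset_mem_sym (K : {group gT}) w t : (w \in t *: K) = (t \in w *: K).
Proof.
by rewrite !mem_lcoset -groupV invMg invgK.
Qed.

Lemma periodic_lcoset (K : {group gT}) Z z : Z * K = Z -> z \in Z -> z *: K \subset Z.
Proof.
move=> ZK Zz; apply/subsetP=> y; rewrite mem_lcoset => Ky.
by rewrite -ZK -(mulKVg z y); apply: mem_mulg.
Qed.

Lemma card_sum R Y : #|R :&: Y| = \sum_(w in R) (w \in Y : nat).
Proof.
rewrite -sum1_card big_mkcond /= [RHS]big_mkcond /=; apply: eq_bigr => w _.
by rewrite inE; case: (w \in R); case: (w \in Y).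
Qed.

Lemma dcount (K : {group gT}) Z R : Z * K = Z ->
  \sum_(t in Z) #|R :&: t *: K| = (#|R :&: Z| * #|K|)%N.
Proof.
move=> ZK.
under eq_bigr => t _ do rewrite card_sum.
rewrite exchange_big /= card_sum big_distrl /=; apply: eq_bigr => w _.
under eq_bigr => t _ do rewrite lcoset_mem_sym.
rewrite -card_sum; case Zw: (w \in Z); rewrite ?mul1n ?mul0n.
  by rewrite (setIidPr (periodic_lcoset ZK Zw)) card_lcoset.
apply/eqP; rewrite cards_eq0; apply/eqP/setP=> t; rewrite !inE.
apply/andP=> -[Zt wt]; move: Zw; rewrite lcoset_mem_sym in wt.
by rewrite (subsetP (periodic_lcoset ZK Zt)).
Qed.

Lemma periodic_dvd (K : {group gT}) Z : Z * K = Z -> #|K| %| #|Z|.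
Proof.
have [n leZ] : exists n, #|Z| <= n by exists #|Z|.
elim: n Z leZ => [|n IH] Z leZ ZK.
  by move: leZ; rewrite leqn0 cards_eq0 => /eqP ->; rewrite cards0 dvdn0.
case: (set_0Vmem Z) => [->|[z Zz]]; first by rewrite cards0 dvdn0.
have sub := periodic_lcoset ZK Zz.
set Z' := Z :\: z *: K.
have Z'K : Z' * K = Z'.
  apply/eqP; rewrite eqEsubset mulg_subl ?group1 // andbT.
  apply/subsetP=> y /mulsgP[w k Z'w Kk ->].
  have [nw Zw] : w \notin z *: K /\ w \in Z by move: Z'w; rewrite !inE => /andP[].
  rewrite inE; apply/andP; split; last by rewrite -ZK mem_mulg.
  apply: contra nw; rewrite !mem_lcoset => zwk.
  by move: zwk; rewrite mulgA => zwk; rewrite -(mulgK k (z^-1 * w)) groupM ?groupV.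
have -> : #|Z| = (#|z *: K| + #|Z'|)%N by rewrite cardsDS // addnC subnK // subset_leq_card.
rewrite card_lcoset dvdn_addr // IH //.
rewrite -ltnS; apply: leq_trans leZ; rewrite cardsDS // card_lcoset.
rewrite ltn_subrL cardG_gt0 /=; apply/card_gt0P; by exists z.
Qed.

Lemma rowcol (H1 H2 M : {group gT}) x s t : (H1 * H2)%g = M ->
  s \in x *: M -> t \in x *: M -> #|s *: H1 :&: t *: H2| = #|H1 :&: H2|.
Proof.
move=> defM; rewrite !mem_lcoset => xs xt.
have : s^-1 * t \in M.
  have -> : s^-1 * t = (x^-1 * s)^-1 * (x^-1 * t) by rewrite invMg invgK mulgA mulgK.
  by rewrite groupM ?groupV.
rewrite -defM => /mulsgP[a b Ha Hb Eab].
have Et : t = s * (a * b) by rewrite -Eab mulKVg.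
rewrite -(card_lcoset (H1 :&: H2) (s * a)); apply: eq_card => y.
rewrite !inE !mem_lcoset Et !invMg -!mulgA.
rewrite [X in _ && X](groupMl _ (groupVr Hb)).
by rewrite inE (groupMl _ (groupVr Ha)).
Qed.

Lemma grid_identity (H1 H2 M : {group gT}) x S T : (H1 * H2)%g = M ->
  S * H1 = S -> T * H2 = T -> S \subset x *: M -> T \subset x *: M ->
  (#|S :&: T| * #|H1| * #|H2| = #|S| * #|T| * #|H1 :&: H2|)%N.
Proof.
move=> defM SH TH sS sT.
rewrite setIC -(dcount T SH) big_distrl /= -mulnA -sum_nat_const.
apply: eq_bigr => s Ss.
rewrite setIC -(dcount (s *: H1) TH) -sum_nat_const; apply: eq_bigr => t Tt.
exact: rowcol defM (subsetP sS s Ss) (subsetP sT t Tt).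
Qed.

End Generic.

Section Kn.
Local Open Scope group_scope.
Variable gT : finGroupType.
Variable G : {group gT}.
Hypothesis abG : abelian G.
Implicit Types X Y S T : {set gT}.

Lemma commG x y : x \in G -> y \in G -> x * y = y * x.
Proof. by move=> Gx Gy; apply: (centsP abG). Qed.

Lemma commS X Y : X \subset G -> Y \subset G -> X * Y = Y * X.
Proof.
move=> sX sY; apply: centC; apply: subset_trans sX _.
apply: subset_trans abG _; exact: centS.
Qed.

Definition stab X := [set g in G | X :* g == X].

Lemma stab_group_set X : group_set (stab X).
Proof.
apply/group_setP; split; first by rewrite inE group1 rcoset1 eqxx.
move=> x y; rewrite !inE => /andP[Gx /eqP Xx] /andP[Gy /eqP Xy].
by rewrite groupM // rcosetM Xx Xy eqxx.
Qed.
Canonical stab_group X := Group (stab_group_set X).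

Lemma stab_sub X : stab X \subset G.
Proof. by apply/subsetP=> x; rewrite inE => /andP[]. Qed.

Lemma stabP X g : g \in stab X -> X :* g = X.
Proof. by rewrite inE => /andP[_ /eqP]. Qed.

Lemma mul_stab X : X * stab X = X.
Proof.
apply/eqP; rewrite eqEsubset mulg_subl ?group1 // andbT.
apply/subsetP=> z /mulsgP[x g Xx Sg ->].
by rewrite -(stabP Sg) mem_rcoset mulgK.
Qed.

Lemma stab_mulP X (H : {group gT}) : H \subset G -> X * H = X -> H \subset stab X.
Proof.
move=> sHG XH; apply/subsetP=> h Hh; rewrite inE (subsetP sHG) //=.
rewrite eqEcard card_rcoset leqnn andbT.
by rewrite -{2}XH; apply/subsetP=> z /rcosetP[x Xx ->]; apply: mem_mulg.
Qed.

Lemma periodicE X (H : {group gT}) : H \subset stab X -> X * H = X.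
Proof.
move=> sH; apply/eqP; rewrite eqEsubset mulg_subl ?group1 // andbT.
by apply: subset_trans (mulgS X sH) _; rewrite mul_stab.
Qed.

Lemma periodicI X Y (H : {group gT}) : X * H = X -> Y * H = Y -> (X :&: Y) * H = X :&: Y.
Proof.
move=> XH YH; apply/eqP; rewrite eqEsubset mulg_subl ?group1 // andbT subsetI.
apply/andP; split; [rewrite -{2}XH | rewrite -{2}YH]; apply: mulSg;
  [apply: subsetIl | apply: subsetIr].
Qed.

Lemma stab_mul X Y : Y \subset G -> stab X \subset stab (X * Y).
Proof.
move=> sY; apply/subsetP=> g; rewrite !inE => /andP[Gg /eqP Xg]; rewrite Gg /=.
have g1 : [set g] \subset G by rewrite sub1set.
by rewrite -mulgA (commS sY g1) mulgA Xg.
Qed.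

Lemma union_conv N S T : S \subset G -> T \subset G -> S :&: T != set0 ->
  N <= #|S| + #|stab S| -> N <= #|T| + #|stab T| ->
  N <= #|S :|: T| + #|stab (S :|: T)|.
Proof.
move=> sSG sTG nST hS hT.
have [sST|nsST] := boolP (S \subset T); first by rewrite (setUidPr sST).
have [sTS|nsTS] := boolP (T \subset S); first by rewrite (setUidPl sTS).
set H1 := stab S; set H2 := stab T.
have SH : S * H1 = S := mul_stab S. have TH : T * H2 = T := mul_stab T.
set D := (H1 :&: H2)%G.
have sD : #|D| <= #|stab (S :|: T)|.
  apply: subset_leq_card; apply: stab_mulP; first by rewrite subIset ?stab_sub.
  by rewrite mulUg !periodicE ?subsetIl ?subsetIr.
suff key : (#|H1| <= #|T :\: S| + #|D|) || (#|H2| <= #|S :\: T| + #|D|).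
  case/orP: key => k.
    rewrite cardsUD; apply: leq_trans hS _; rewrite -addnA leq_add2l.
    by apply: leq_trans k _; rewrite leq_add2l.
  rewrite setUC cardsUD; apply: leq_trans hT _; rewrite -addnA leq_add2l.
  by apply: leq_trans k _; rewrite leq_add2l setUC.
have cH : commute H1 H2 := commS (stab_sub S) (stab_sub T).
have Mg : group_set (H1 * H2) by apply/comm_group_setP.
pose M := Group Mg.
have defM : (H1 * H2)%g = M by [].
have sH1M : H1 \subset M by rewrite -defM mulg_subl ?group1.
have sH2M : H2 \subset M by rewrite -defM mulg_subr ?group1.
case: (boolP [exists x in S :&: T, ~~ (x *: M \subset S :&: T)]).
  case/exists_inP => x STx nsub.
  have [Sx Tx] : x \in S /\ x \in T by move: STx; rewrite inE => /andP[].
  set S' := S :&: x *: M; set T' := T :&: x *: M.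
  have xMH1 : x *: M * H1 = x *: M by rewrite -mulgA mulGSid.
  have xMH2 : x *: M * H2 = x *: M by rewrite -mulgA mulGSid.
  have S'H : S' * H1 = S' := periodicI SH xMH1.
  have T'H : T' * H2 = T' := periodicI TH xMH2.
  have hid := grid_identity defM S'H T'H (subsetIr _ _) (subsetIr _ _).
  have d0 : 0 < #|D| := cardG_gt0 D.
  have dv1 : #|D| %| #|H1| by apply: cardSg; apply: subsetIl.
  have dv2 : #|D| %| #|H2| by apply: cardSg; apply: subsetIr.
  have ds := periodic_dvd S'H. have dt := periodic_dvd T'H.
  have hm : (#|M| * #|D| = #|H1| * #|H2|)%N by rewrite (mul_cardG (stab_group S) (stab_group T)).
  have sle : #|H1| <= #|S'|.
    rewrite -(card_lcoset H1 x); apply: subset_leq_card; rewrite subsetI.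
    by rewrite (periodic_lcoset SH Sx) lcosetS sH1M.
  have tle : #|H2| <= #|T'|.
    rewrite -(card_lcoset H2 x); apply: subset_leq_card; rewrite subsetI.
    by rewrite (periodic_lcoset TH Tx) lcosetS sH2M.
  have sge : #|S'| <= #|M| by rewrite -(card_lcoset M x) subset_leq_card ?subsetIr.
  have tge : #|T'| <= #|M| by rewrite -(card_lcoset M x) subset_leq_card ?subsetIr.
  have strict : (#|S'| < #|M|) || (#|T'| < #|M|).
    rewrite !ltn_neqAle sge tge !andbT -negb_and; apply: contra nsub => /andP[/eqP eS /eqP eT].
    have e1 : S' = x *: M by apply/eqP; rewrite eqEcard subsetIr card_lcoset eS leqnn.
    have e2 : T' = x *: M by apply/eqP; rewrite eqEcard subsetIr card_lcoset eT leqnn.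
    by rewrite subsetI -{1}e1 -e2 subsetIl subsetIl.
  have := grid_arith d0 dv1 dv2 ds dt hid hm sle sge tle tge strict.
  rewrite -cardsD (setIC S' T') -cardsD.
  have sub1 : T' :\: S' \subset T :\: S.
    apply/subsetP=> y; rewrite !inE => /andP[nS /andP[Ty xy]]; rewrite Ty andbT.
    by apply: contra nS => ->.
  have sub2 : S' :\: T' \subset S :\: T.
    apply/subsetP=> y; rewrite !inE => /andP[nT /andP[Sy xy]]; rewrite Sy andbT.
    by apply: contra nT => ->.
  case/orP => k; apply/orP; [left|right]; apply: leq_trans k _; rewrite leq_add2r;
    exact: subset_leq_card.
rewrite negb_exists_in => /forall_inP allsub.
case/subsetPn: nsTS => y Ty nSy.
case/subsetPn: nsST => z Sz nTz.
have k2 : #|H2| <= #|T :\: S|.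
  rewrite -(card_lcoset H2 y); apply: subset_leq_card; apply/subsetP=> w wy.
  rewrite inE (subsetP (periodic_lcoset TH Ty)) // andbT; apply/negP=> Sw.
  have STw : w \in S :&: T by rewrite inE Sw (subsetP (periodic_lcoset TH Ty)).
  have := allsub w STw; rewrite negbK => sub.
  move: nSy; rewrite (subsetP (subset_trans sub (subsetIl _ _))) //.
  by rewrite lcoset_mem_sym in wy; rewrite (subsetP _ y wy) // lcosetS.
have k1 : #|H1| <= #|S :\: T|.
  rewrite -(card_lcoset H1 z); apply: subset_leq_card; apply/subsetP=> w wz.
  rewrite inE (subsetP (periodic_lcoset SH Sz)) // andbT; apply/negP=> Tw.
  have STw : w \in S :&: T by rewrite inE Tw (subsetP (periodic_lcoset SH Sz)).
  have := allsub w STw; rewrite negbK => sub.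
  move: nTz; rewrite (subsetP (subset_trans sub (subsetIr _ _))) //.
  by rewrite lcoset_mem_sym in wz; rewrite (subsetP _ z wz) // lcosetS.
case: (leqP #|H1| #|H2|) => h; apply/orP; [left|right].
  by apply: leq_trans h _; apply: leq_trans k2 _; apply: leq_addr.
by apply: leq_trans (ltnW h) _; apply: leq_trans k1 _; apply: leq_addr.
Qed.

Lemma bigcup_subG (F : gT -> {set gT}) (P : pred gT) l :
  (forall b, P b -> F b \subset G) -> all P l -> \bigcup_(b <- l) F b \subset G.
Proof.
move=> sF; elim: l => [|b l IHl]; first by rewrite big_nil sub0set.
rewrite big_cons /= => /andP[Pb Pl]; by rewrite subUset (sF _ Pb) IHl.
Qed.

Lemma conv_bigcup N (F : gT -> {set gT}) (P : pred gT) l :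
  (forall b, P b -> F b \subset G) ->
  (forall b, P b -> N <= #|F b| + #|stab (F b)|) ->
  (forall b b', P b -> P b' -> F b :&: F b' != set0) ->
  all P l -> l != [::] ->
  N <= #|\bigcup_(b <- l) F b| + #|stab (\bigcup_(b <- l) F b)|.
Proof.
move=> sF cF iF; elim: l => // b l IHl; rewrite big_cons /= => /andP[Pb Pl] _.
case: l IHl Pl => [|b2 l] IHl Pl; first by rewrite big_nil setU0 cF.
apply: union_conv; [exact: sF | exact: bigcup_subG Pl | | exact: cF | exact: IHl].
move: Pl => /= /andP[Pb2 _].
case/set0Pn: (iF b b2 Pb Pb2) => y; rewrite inE => /andP[y1 y2].
by apply/set0Pn; exists y; rewrite inE y1 big_cons inE y2.
Qed.

Lemma mulG_subG' X Y : X \subset G -> Y \subset G -> X * Y \subset G.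
Proof. by move=> sX sY; apply: subset_trans (mulgSS sX sY) _; rewrite mulGid. Qed.

Lemma lcoset_subG e X : e \in G -> X \subset G -> e *: X \subset G.
Proof. by move=> Ge sX; apply: mulG_subG'; rewrite ?sub1set. Qed.

Definition meas (A B : {set gT}) := muln #|A * B| #|G|.+1 + #|B * stab (A * B)|.

Lemma kneser_ind n A B : meas A B < n -> A \subset G -> B \subset G -> A != set0 -> B != set0 ->
  #|A * stab (A * B)| + #|B * stab (A * B)| <= #|A * B| + #|stab (A * B)|.
Proof.
elim: n A B => // n IH A B lt sA sB nA nB.
set C := A * B; set H := stab C; set A' := A * H; set B' := B * H.
have sH : H \subset G := stab_sub C.
have sC : C \subset G := mulG_subG' sA sB.
have sA' : A' \subset G := mulG_subG' sA sH.
have sB' : B' \subset G := mulG_subG' sB sH.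
have CH : C * H = C := mul_stab C.
have HH : H * H = H := mulGid (stab_group C).
have eC : A' * B' = C.
  by rewrite /A' /B' mulgA -(mulgA A H B) (commS sH sB) mulgA -/C -mulgA HH CH.
have A'H : A' * H = A' by rewrite /A' -mulgA HH.
have B'H : B' * H = B' by rewrite /B' -mulgA HH.
have nA' : A' != set0.
  by case/set0Pn: nA => a Aa; apply/set0Pn; exists a; rewrite (subsetP (mulg_subl _ (group1 H))).
have sBB' : B \subset B' by rewrite mulg_subl ?group1.
case: (boolP [exists b0 in B', B' \subset b0 *: H]).
  case/exists_inP => b0 B'b0 sub.
  apply: leq_add; last by rewrite -(card_lcoset H b0) subset_leq_card.
  rewrite -(card_rcoset A' b0) -eC; apply: subset_leq_card; apply: mulgS.
  by rewrite sub1set.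
rewrite negb_exists_in => /forall_inP nsub.
have claim : forall b0, b0 \in B' -> exists2 a1, a1 \in A' & ~~ ((a1 * b0^-1) *: B' \subset A').
  move=> b0 B'b0; apply/exists_inP; apply: contraR (nsub b0 B'b0) => /exists_inPn all.
  apply/subsetP=> b B'b; rewrite mem_lcoset.
  have Gb0 : b0 \in G := subsetP sB' b0 B'b0.
  have Gb : b \in G := subsetP sB' b B'b.
  have Gg : b0^-1 * b \in G by rewrite groupM ?groupV.
  have : b0^-1 * b \in stab A'.
    rewrite inE Gg eqEcard card_rcoset leqnn andbT.
    apply/subsetP=> y /rcosetP[a1 A'a1 ->].
    have := all a1 A'a1; rewrite negbK => /subsetP; apply.
    by rewrite mem_lcoset invMg invgK mulgA mulgKV mulKVg.
  by move/(subsetP (stab_mul A' sB')); rewrite eC.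
pose f b0 := odflt 1 [pick a1 in A' | ~~ ((a1 * b0^-1) *: B' \subset A')].
have fP : forall b0, b0 \in B' -> f b0 \in A' /\ ~~ ((f b0 * b0^-1) *: B' \subset A').
  move=> b0 B'b0; rewrite /f; case: pickP => [a /andP[]|none] //=.
  by case: (claim b0 B'b0) => a1 A'a1 na1; move: (none a1); rewrite A'a1 na1.
pose e b0 := f b0 * b0^-1.
pose F b0 := (A' :|: e b0 *: B') * (B' :&: (e b0)^-1 *: A').
have Ge : forall b0, b0 \in B' -> e b0 \in G.
  move=> b0 B'b0; rewrite groupM ?groupV //; [apply: (subsetP sA'); exact: (fP _ B'b0).1|].
  exact: (subsetP sB').
have FC : forall b0, b0 \in B' -> F b0 \subset C.
  move=> b0 B'b0; apply/subsetP=> z /mulsgP[x y Xx Yy ->].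
  move: Yy; rewrite inE mem_lcoset invgK => /andP[B'y eA'y].
  case/setUP: Xx => [A'x|].
    have -> : C = A' * B' by rewrite eC.
    exact: mem_mulg.
  rewrite mem_lcoset => B'x'.
  have -> : x * y = (e b0)^-1 * x * (e b0 * y).
    rewrite mulgA; congr (_ * _); rewrite -(commG (Ge b0 B'b0)) ?mulKVg //.
    exact: (subsetP sB') _ B'x'.
  have -> : C = B' * A' by rewrite -(commS sA' sB') eC.
  exact: mem_mulg.
have FA : forall b0, b0 \in B' -> A' :* b0 \subset F b0.
  move=> b0 B'b0; apply: mulgSS; first exact: subsetUl.
  rewrite sub1set inE B'b0 mem_lcoset invgK /e mulgKV; exact: (fP _ B'b0).1.
have FB : forall b0, b0 \in B' -> f b0 *: B' \subset F b0.
  move=> b0 B'b0; apply/subsetP=> z /lcosetP[b B'b ->].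
  have -> : f b0 * b = (e b0 * b) * b0.
    rewrite /e -!mulgA; congr (_ * _); rewrite (commG (_ : b \in G) (_ : b0 \in G)) ?mulKg //;
      exact: (subsetP sB').
  apply: mem_mulg; first by rewrite inE mem_lcoset mulKg B'b orbT.
  by rewrite inE B'b0 mem_lcoset invgK /e mulgKV; exact: (fP _ B'b0).1.
have Fconv : forall b0, b0 \in B' -> #|A'| + #|B'| <= #|F b0| + #|stab (F b0)|.
  move=> b0 B'b0.
  have Geb := Ge b0 B'b0.
  set Ae := A' :|: e b0 *: B'; set Be := B' :&: (e b0)^-1 *: A'.
  have sAe : Ae \subset G by rewrite subUset sA' lcoset_subG.
  have sBe : Be \subset G := subset_trans (subsetIl _ _) sB'.
  have Beb0 : b0 \in Be.
    by rewrite inE B'b0 mem_lcoset invgK /e mulgKV; exact: (fP _ B'b0).1.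
  have nAe : Ae != set0.
    case/set0Pn: nA' => a A'a; apply/set0Pn; exists a; by rewrite inE A'a.
  have nBe : Be != set0 by apply/set0Pn; exists b0.
  have sF : F b0 \subset C := FC b0 B'b0.
  have eAH : (e b0)^-1 *: A' * H = (e b0)^-1 *: A' by rewrite -mulgA A'H.
  have BeH : Be * H = Be := periodicI B'H eAH.
  have pBe : Be \proper B'.
    rewrite properEneq subsetIl andbT; apply: contraNneq (fP b0 B'b0).2 => eq.
    have : B' \subset (e b0)^-1 *: A' by rewrite -eq subsetIr.
    by rewrite -(lcosetS (e b0)) lcosetKV.
  have ltm : meas Ae Be < n.
    rewrite -ltnS; apply: leq_trans lt; rewrite ltnS /meas -/(F b0) -/C -/H.
    have hC : #|F b0| <= #|C| := subset_leq_card sF.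
    case: (ltnP #|F b0| #|C|) => hFC.
      apply: leq_trans (leq_addr _ _); apply: leq_trans (_ : (#|F b0|.+1 * #|G|.+1)%N <= _).
        rewrite mulSn [in X in _ < X]addnC ltn_add2l ltnS; apply: subset_leq_card.
        by apply: mulG_subG'; rewrite ?stab_sub.
      by rewrite leq_mul2r hFC orbT.
    have eF : F b0 = C by apply/eqP; rewrite eqEcard sF hFC.
    rewrite eF -/H BeH ltn_add2l /B'; exact: proper_card.
  have := IH Ae Be ltm sAe sBe nAe nBe.
  rewrite -/(F b0) => h; apply: leq_trans h; set K := stab (F b0).
  have eBe : e b0 *: Be = e b0 *: B' :&: A'.
    by apply/setP=> y; rewrite /Be !inE !mem_lcoset !inE !mem_lcoset invgK mulKVg.
  have -> : (#|A'| + #|B'| = #|Ae| + #|Be|)%N.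
    rewrite -(card_lcoset Be (e b0)) eBe setIC; apply/eqP.
    by rewrite cardsUI card_lcoset.
  by apply: leq_add; apply: subset_leq_card; apply: mulg_subl; apply: group1.
have iF : forall b b', b \in B' -> b' \in B' -> F b :&: F b' != set0.
  move=> b b' Bb Bb'; apply/set0Pn; exists (f b' * b); rewrite inE.
  rewrite (subsetP (FA b Bb)) ?(subsetP (FB b' Bb')) //.
    by rewrite mem_lcoset mulKg.
  by rewrite mem_rcoset mulgK; exact: (fP _ Bb').1.
have sF : forall b, b \in B' -> F b \subset G.
  by move=> b Bb; apply: subset_trans (FC b Bb) sC.
have nB' : enum B' != [::].
  apply/eqP=> E; case/set0Pn: nB => b Bb.
  by have := mem_enum B' b; rewrite E (subsetP sBB') //.
have allB : all (mem B') (enum B') by apply/allP=> b; rewrite mem_enum.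
have := conv_bigcup sF Fconv iF allB nB'.
rewrite big_enum /=.
have -> : \bigcup_(b in B') F b = C.
  apply/eqP; rewrite eqEsubset; apply/andP; split.
    by apply/bigcupsP=> b Bb; exact: FC.
  rewrite -{1}eC; apply/subsetP=> z /mulsgP[a b A'a B'b ->].
  apply/bigcupP; exists b => //; apply: (subsetP (FA b B'b)).
  by rewrite mem_rcoset mulgK.
by [].
Qed.

End Kn.

Section Main.
Local Open Scope group_scope.

Lemma main_aux (gT : finGroupType) (G : {group gT}) (A : {set gT}) (rho : nat) :
  abelian G -> 4 <= rho ->
  A \subset G -> <<A>> = G ->
  diam_ge A G rho ->
  (3 * #|G| < 2 * rho * #|A|)%N ->
  exists (H : {group gT}) (g : gT),
    [/\ H \subset G, g \in G,
        A \subset H :|: (g *: H) &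
        ((3 * rho + 3) * #|H| < 2 * rho * #|A|)%N] /\
    [/\ cyclic (G / H),
        rho.+1 <= #|(G / H)|,
        (3 * #|(G / H)| < 4 * rho)%N &
        <[coset H g]> = (G / H)].
Proof.
move=> abG r4 sAG genA diam hden.
set B := A0 A.
have sBG : B \subset G by rewrite /B /A0 subUset sub1set group1 sAG.
have B1 : 1 \in B by rewrite /B /A0 setU11.
have sAB : A \subset B by rewrite /B /A0 subsetUr.
have Ssub : forall k, sumsetA A k \subset G.
  elim=> [|k IH] /=; [by rewrite sub1G | exact: mulG_subG' IH sBG].
have S1 : forall k, 1 \in sumsetA A k.
  elim=> [|k IH] /=; [by rewrite set11 | by rewrite -(mulg1 1) mem_mulg].
have Sadd : forall a b, sumsetA A (a + b) = sumsetA A a * sumsetA A b.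
  move=> a; elim=> [|b IH]; first by rewrite addn0 /= mulg1.
  by rewrite addnS /= IH mulgA.
set m := rho.-1.
have m3 : 3 <= m by rewrite /m -ltnS prednK // (leq_trans _ r4).
have rm : rho = m.+1 by rewrite /m prednK // (leq_trans _ r4).
have Sm : sumsetA A m != G.
  by apply/eqP => E; have := diam m E; rewrite rm ltnn.
pose H := stab_group G (sumsetA A m).
have sHG : H \subset G by apply: stab_sub.
have SmH : sumsetA A m * H = sumsetA A m by apply: mul_stab.
have HH : H * H = H := mulGid H.
have nS : forall k, sumsetA A k != set0 by move=> k; apply/set0Pn; exists 1.
have chain : forall k, 0 < k -> k <= m ->
    (k * #|(B * H)%g| <= #|(sumsetA A k * H)%g| + k.-1 * #|H|)%N.
  elim=> // k IH _ km.
  case: k IH km => [|k] IH km; first by rewrite /= mul1g mul1n mul0n addn0.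
  have IH' := IH isT (ltnW km).
  set X := sumsetA A k.+1 * H; set Y := B * H.
  have sX : X \subset G := mulG_subG' (Ssub _) sHG.
  have sY : Y \subset G := mulG_subG' sBG sHG.
  have nX : X != set0 by apply/set0Pn; exists 1; rewrite -(mulg1 1) mem_mulg.
  have nY : Y != set0 by apply/set0Pn; exists 1; rewrite -(mulg1 1) mem_mulg.
  have eXY : X * Y = sumsetA A k.+2 * H.
    rewrite /X /Y mulgA -(mulgA _ H B) -(commS abG sBG sHG) mulgA -mulgA HH.
    by [].
  have eK : stab G (X * Y) = H.
    rewrite eXY; apply/eqP; rewrite eqEsubset; apply/andP; split.
      have e : sumsetA A k.+2 * H * sumsetA A (m - k.+2) = sumsetA A m.
        by rewrite -mulgA (commS abG sHG (Ssub _)) mulgA -Sadd subnKC // SmH.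
      by apply: subset_trans (stab_mul abG _ (Ssub (m - k.+2))) _; rewrite e.
    by apply: stab_mulP => //; rewrite -mulgA HH.
  have hk := kneser_ind abG (ltnSn _) sX sY nX nY.
  rewrite eK eXY in hk.
  have XH : X * H = X by rewrite /X -mulgA HH.
  have YH : Y * H = Y by rewrite /Y -mulgA HH.
  rewrite XH YH in hk.
  rewrite mulSn; apply: leq_trans (leq_add (leqnn #|Y|) IH') _.
  rewrite addnA [(#|Y| + #|X|)%N]addnC; apply: leq_trans (leq_add hk (leqnn _)) _.
  by rewrite -addnA -mulSn.
have hchain := chain m (leq_ltn_trans (leq0n 2) m3) (leqnn m).
rewrite SmH in hchain.
have cmpl : (#|sumsetA A m| + #|H| <= #|G|)%N.
  have nsub : ~~ (G \subset sumsetA A m).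
    by apply: contra Sm => sub; rewrite eqEsubset Ssub sub.
  case/subsetPn: nsub => y Gy nSy.
  have sub : y *: H \subset G :\: sumsetA A m.
    apply/subsetP=> z /lcosetP[h Hh ->]; rewrite inE (groupM Gy (subsetP sHG h Hh)) andbT.
    by apply: contra nSy => Sz; rewrite -(mulgK h y) -SmH mem_mulg ?groupV.
  rewrite -(card_lcoset H y).
  apply: leq_trans (leq_add (leqnn _) (subset_leq_card sub)) _.
  by rewrite cardsDS ?Ssub // subnKC // subset_leq_card // Ssub.
have BHH : (B * H) * H = B * H by rewrite -mulgA HH.
have dBH : #|H| %| #|(B * H)%g| := periodic_dvd BHH.
have dG : #|H| %| #|G| := cardSg sHG.
case/dvdnP: dBH => a Ea. case/dvdnP: dG => q Eq.
have h0 : 0 < #|H| := cardG_gt0 H.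
have hA : (#|A| <= a * #|H|)%N.
  rewrite -Ea; apply: leq_trans (subset_leq_card sAB) _; apply: subset_leq_card.
  by apply: mulg_subl; exact: group1.
have h3q : (3 * q < 2 * rho * a)%N.
  have := leq_trans hden (leq_mul (leqnn _) hA).
  by rewrite Eq !mulnA ltn_pmul2r.
have hm : (m * a + 1 <= q + m.-1)%N.
  rewrite -(leq_pmul2r h0) mulnDl mul1n -mulnA -Ea mulnDl -Eq.
  apply: leq_trans (leq_add hchain (leqnn _)) _.
  by rewrite addnAC; apply: leq_add cmpl (leqnn _).
have a0 : 0 < a.
  have : 0 < #|(B * H)%g| by apply/card_gt0P; exists 1; rewrite -(mulg1 1) mem_mulg.
  by rewrite Ea muln_gt0 => /andP[].
case: a a0 Ea hA h3q hm => [//|a'] _ Ea hA h3q hm.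
have mm : m = m.-1.+1 by rewrite prednK // (leq_ltn_trans (leq0n 2) m3).
have hm' : (m * a' + 2 <= q)%N.
  move: hm mm; rewrite mulnS; move: (m.-1) => p; move: (m * a')%N => x.
  move=> /leP hm mm'; rewrite mm' in hm; apply/leP; move: hm; rewrite -!plusE => hm; lia.
case: a' Ea hA h3q hm hm' => [|[|a'']] Ea hA h3q hm hm'.
- exfalso.
  have eBH : (B * H)%g = H.
    by apply/eqP; rewrite eq_sym eqEcard mulg_subr // Ea mul1n leqnn.
  have sGH : G \subset H.
    rewrite -genA gen_subG; apply: subset_trans sAB _; rewrite -eBH.
    by apply: mulg_subl; exact: group1.
  have := subset_leq_card sGH; rewrite Eq -{2}(mul1n #|H|) leq_pmul2r // => q1.
  by move: hm'; rewrite muln0 add0n => /(leq_trans)/(_ q1).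
- have nBH : ~~ (B \subset H).
    apply/negP=> sBH; have : (B * H)%g \subset H by rewrite -{2}HH mulSg.
    move/subset_leq_card; rewrite Ea mul2n -addnn -{3}(addn0 #|H|) leq_add2l leqn0.
    by move/eqP=> E; move: h0; rewrite E.
  case/subsetPn: nBH => g Bg nHg.
  have gA : g \in A.
    move: Bg; rewrite /B /A0 => /setU1P[eg|//].
    by move: nHg; rewrite eg group1.
  have Gg : g \in G := subsetP sAG g gA.
  have dis : H :&: g *: H = set0.
    apply/eqP; rewrite -subset0; apply/subsetP=> x; rewrite inE mem_lcoset => /andP[Hx gx].
    by move: gx; rewrite (groupMr _ Hx) => /groupVr; rewrite invgK => Hg; move: nHg; rewrite Hg.
  have eBH : (B * H)%g = H :|: g *: H.
    apply/eqP; rewrite eq_sym eqEcard; apply/andP; split.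
      by rewrite subUset mulg_subr //; apply: mulSg; rewrite sub1set.
    have := cardsUI H (g *: H); rewrite dis cards0 addn0 card_lcoset => ->.
    by rewrite Ea mul2n addnn.
  have sAU : A \subset H :|: g *: H.
    by rewrite -eBH; apply: subset_trans sAB _; apply: mulg_subl; exact: group1.
  have nHG : G \subset 'N(H) := sub_abelian_norm abG sHG.
  have cq : #|G / H| = q.
    rewrite card_quotient //; apply/eqP; rewrite -(eqn_pmul2l h0) (Lagrange sHG) Eq.
    by rewrite mulnC.
  have rq : rho.+1 <= q by move: hm'; rewrite muln1 rm addn2.
  have eC : <[coset H g]> = G / H.
    apply/eqP; rewrite eqEsubset cycle_subG mem_quotient //=.
    have sGP : G \subset coset H @*^-1 <[coset H g]>.
      rewrite -genA gen_subG; apply/subsetP=> a Aa.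
      have Na : a \in 'N(H) := subsetP nHG a (subsetP sAG a Aa).
      have Ng : g \in 'N(H) := subsetP nHG g Gg.
      apply/morphpreP; split => //.
      case/setUP: (subsetP sAU a Aa) => [Ha|].
        by have -> : coset_morphism H a = 1 by apply: coset_id.
      rewrite mem_lcoset => Hga.
      have Nga : g^-1 * a \in 'N(H) by rewrite groupM ?groupV.
      have E : coset H a = coset H g * coset H (g^-1 * a) by rewrite -morphM ?mulKVg.
      rewrite (coset_id Hga) mulg1 in E.
      by change (coset H a \in <[coset H g]>); rewrite E cycle_id.
    apply/subsetP=> y; rewrite -imset_coset => /imsetP[x Gx ->].
    by have := subsetP sGP x Gx; rewrite !inE => /andP[_].
  exists H, g; split; split => //.
  + have -> : (3 * rho + 3 = 3 * rho.+1)%N by rewrite mulnS addnC.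
    apply: leq_ltn_trans hden; rewrite Eq mulnA leq_mul2r leq_mul2l rq.
    by rewrite !orbT.
  + by apply/cyclicP; exists (coset H g).
  + by rewrite cq.
  + by rewrite cq; move: h3q; rewrite [(2 * rho * 2)%N]mulnC mulnA.
- exfalso; apply: (@arith_a3_ssr m a''.+2 q m3 isT hm').
  by rewrite -rm.
Qed.

End Main.

Theorem theorem2p10 (gT : finGroupType) (G : {group gT}) (A : {set gT})
    (rho : nat) :
  abelian G -> 4 <= rho ->
  A \subset G -> <<A>>%g = G ->
  diam_ge A G rho ->
  3 * #|G| < 2 * rho * #|A| ->
  exists (H : {group gT}) (g : gT),
    [/\ H \subset G, g \in G,
        A \subset H :|: (g *: H)%g &
        (3 * rho + 3) * #|H| < 2 * rho * #|A|] /\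
    [/\ cyclic (G / H)%g,
        rho.+1 <= #|(G / H)%g|,
        3 * #|(G / H)%g| < 4 * rho &
        <[coset H g]>%g = (G / H)%g].
Proof. exact: main_aux. Qed.
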